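(* Let $H$ be a Hilbert space and $U_{ik}\in B(H)$, $i,k=1,\dots,n$, operators satisfying relations (R1)–(R5). Then for all $i,j,k,l$ with $i\neq j$ and $k\neq l$, $$U_{ik}U_{jl}=\omega_{ji}\omega_{kl}U_{jl}U_{ik}.$$
   Context: $n\ge2$, $\theta\in M_n(\mathbb R)$ skew-symmetric, $\omega_{ij}=e^{2\pi i\theta_{ij}}$. Relations, for all $i,j,k,l\in\{1,\dots,n\}$: (R1) $U_{ik}U_{jl}+\omega_{ji}U_{jk}U_{il}=\omega_{kl}U_{il}U_{jk}+\omega_{ji}\omega_{kl}U_{jl}U_{ik}$; (R2) $\sum_iU_{ik}U_{il}^*=\delta_{kl}1$; (R3) $\sum_iU_{il}^*U_{ik}=\delta_{kl}1$; (R4) $U_{jk}U_{ik}^*=0$ for $i\neq j$; (R5) $U_{ik}^*U_{jk}=0$ for $i\neq j$. *)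

(* Defs.v *)
From HB Require Import structures.
From mathcomp Require Import all_boot all_order all_algebra.
From mathcomp Require Import complex.
From mathcomp Require Import reals trigo.
Set Implicit Arguments. Unset Strict Implicit. Unset Printing Implicit Defensive.
Import Order.TTheory GRing.Theory Num.Theory.
Local Open Scope ring_scope.
Local Open Scope complex_scope.

Section Hilbert.
Variable R : realType.
Variable H : lmodType R[i].
Variable ip : H -> H -> R[i].   (* inner product, linear in 1st argument *)

Definition ipnorm (x : H) : R := Num.sqrt (complex.Re (ip x x)).

Definition is_hilbert : Prop :=
  [/\ (forall a x y z, ip (a *: x + y) z = a * ip x z + ip y z),
      (forall x y, ip y x = (ip x y)^*),
      (forall x, 0 <= ip x x),
      (forall x, ip x x = 0 -> x = 0) &
      (forall u : nat -> H,
         (forall e : R, 0 < e -> exists N, forall m k, (N <= m)%N -> (N <= k)%N ->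
              ipnorm (u m - u k) < e) ->
         exists x, forall e : R, 0 < e -> exists N, forall m, (N <= m)%N ->
              ipnorm (u m - x) < e)].

Definition is_bounded (T : H -> H) : Prop :=
  (forall a x y, T (a *: x + y) = a *: T x + T y) /\
  exists M : R, forall x, ipnorm (T x) <= M * ipnorm x.

Definition is_adjoint (T Ts : H -> H) : Prop :=
  forall x y, ip (T x) y = ip x (Ts y).

Definition opmul (S T : H -> H) : H -> H := fun x => S (T x).
Definition opadd (S T : H -> H) : H -> H := fun x => S x + T x.
Definition opscale (a : R[i]) (T : H -> H) : H -> H := fun x => a *: T x.
Definition opid : H -> H := fun x => x.
Definition opzero : H -> H := fun _ => 0.
Definition opsum n (F : 'I_n -> H -> H) : H -> H := fun x => \sum_(i < n) F i x.
End Hilbert.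

(* omega = exp(2 pi i theta) *)
Definition omega (R : realType) (t : R) : R[i] :=
  (cos (2 * pi * t)) +i* (sin (2 * pi * t)).

(* Main.v *)
Require Import Defs.
From HB Require Import structures.
From mathcomp Require Import all_boot all_order all_algebra.
From mathcomp Require Import complex.
From mathcomp Require Import reals trigo.
From Stdlib Require Import FunctionalExtensionality.
Import Order.TTheory GRing.Theory Num.Theory.
Local Open Scope ring_scope.
Local Open Scope complex_scope.

Definition linop (R : realType) (H : lmodType R[i]) (T : H -> H) :=
  forall a x y, T (a *: x + y) = a *: T x + T y.
Arguments linop {R H}.

Lemma lin0 {R : realType} {H : lmodType R[i]} {T : H -> H} : linop T -> T 0 = 0.
Proof.
move=> hT; have := hT (-1) 0 0.
by rewrite scaler0 addr0 scaleN1r addNr.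
Qed.

Lemma linD {R : realType} {H : lmodType R[i]} {T : H -> H} : linop T ->
  forall x y, T (x + y) = T x + T y.
Proof. by move=> hT x y; have := hT 1 x y; rewrite !scale1r. Qed.

Lemma linZ {R : realType} {H : lmodType R[i]} {T : H -> H} : linop T ->
  forall a x, T (a *: x) = a *: T x.
Proof. by move=> hT a x; have := hT a x 0; rewrite addr0 (lin0 hT) addr0. Qed.

Lemma linS {R : realType} {H : lmodType R[i]} {T : H -> H} : linop T ->
  forall n (F : 'I_n -> H), T (\sum_(i < n) F i) = \sum_(i < n) T (F i).
Proof. by move=> hT n F; apply: big_morph; [exact: linD | exact: lin0]. Qed.

Lemma adj_lin {R : realType} {H : lmodType R[i]} (ip : H -> H -> R[i]) (T Ts : H -> H) :
  is_hilbert ip -> linop T -> is_adjoint ip T Ts -> linop Ts.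
Proof.
case=> hlin hsym _ hdef _ hT hadj.
have ipr : forall u a y z, ip u (a *: y + z) = a^* * ip u y + ip u z.
  by move=> u a y z; rewrite (hsym (a*:y+z) u) (hsym y u) (hsym z u) hlin rmorphD rmorphM.
move=> a x y.
apply/eqP; rewrite -subr_eq0; apply/eqP; apply: hdef.
set d := Ts (a *: x + y) - (a *: Ts x + Ts y).
rewrite {2}/d -scaleN1r addrC ipr rmorphN1 mulN1r.
by rewrite -(hadj d) (ipr (T d)) !hadj -ipr addNr.
Qed.

Theorem proposition3p16 (R : realType) (H : lmodType R[i]) (ip : H -> H -> R[i])
  (n : nat) (theta : 'M[R]_n) (U Us : 'I_n -> 'I_n -> H -> H) :
  is_hilbert ip ->
  (2 <= n)%N ->
  theta^T = - theta ->
  (forall i k, is_bounded ip (U i k)) ->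
  (forall i k, is_adjoint ip (U i k) (Us i k)) ->
  (* (R1) *)
  (forall i j k l,
     opadd (opmul (U i k) (U j l)) (opscale (omega (theta j i)) (opmul (U j k) (U i l)))
     = opadd (opscale (omega (theta k l)) (opmul (U i l) (U j k)))
             (opscale (omega (theta j i) * omega (theta k l)) (opmul (U j l) (U i k)))) ->
  (* (R2) *)
  (forall k l, opsum (fun i => opmul (U i k) (Us i l)) = if k == l then @opid _ H else @opzero _ H) ->
  (* (R3) *)
  (forall k l, opsum (fun i => opmul (Us i l) (U i k)) = if k == l then @opid _ H else @opzero _ H) ->
  (* (R4) *)
  (forall i j k, i != j -> opmul (U j k) (Us i k) = @opzero _ H) ->
  (* (R5) *)
  (forall i j k, i != j -> opmul (Us i k) (U j k) = @opzero _ H) ->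
  forall i j k l, i != j -> k != l ->
    opmul (U i k) (U j l)
    = opscale (omega (theta j i) * omega (theta k l)) (opmul (U j l) (U i k)).
Proof.
move=> hH _ _ hb hadj R1 R2 R3 R4 R5 i j k l hij hkl.
have LU : forall a b, linop (U a b) by move=> a b; case: (hb a b).
have LUs : forall a b, linop (Us a b) by move=> a b; exact: adj_lin (hadj a b).
have R2p : forall k l v, \sum_(a < n) U a k (Us a l v) = if k == l then v else 0.
  by move=> k' l' v; have := congr1 (fun f => f v) (R2 k' l'); case: eqP.
have R3p : forall k l v, \sum_(a < n) Us a l (U a k v) = if k == l then v else 0.
  by move=> k' l' v; have := congr1 (fun f => f v) (R3 k' l'); case: eqP.
have R4p : forall a b c v, a != b -> U b c (Us a c v) = 0.
  by move=> a b c v h; have := congr1 (fun f => f v) (R4 a b c h).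
have R5p : forall a b c v, a != b -> Us a c (U b c v) = 0.
  by move=> a b c v h; have := congr1 (fun f => f v) (R5 a b c h).
have LP : forall z, U i l (Us i l (U i k z)) = 0.
  move=> z; have := R3p k l z; rewrite (negbTE hkl) => /(congr1 (U i l)).
  rewrite linS // (lin0 (LU i l)) (bigD1 i) //= big1 ?addr0 // => a hai.
  by apply: R4p.
have LQ : forall z, U i k (Us i l (U i l z)) = 0.
  move=> z; have := R2p k l (U i l z); rewrite (negbTE hkl) (bigD1 i) //= big1 ?addr0 //.
  by move=> a hai; rewrite R5p // lin0.
have L2 : forall v, U i k (Us i l v) = 0.
  move=> v; have := R2p l l v; rewrite eqxx => /(congr1 (Us i l)).
  rewrite linS // (bigD1 i) //= big1 ?addr0 //; last by move=> a hai; rewrite R5p 1?eq_sym.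
  by move=> <-; apply: LQ.
set c := omega (theta j i) * omega (theta k l).
pose X v := U i k (U j l v) - c *: U j l (U i k v).
have XD : forall x y, X (x + y) = X x + X y.
  by move=> x y; rewrite /X !(linD (LU _ _)) scalerDr opprD addrACA.
have X0 : X 0 = 0 by rewrite /X !(lin0 (LU _ _)) scaler0 subr0.
have XS : forall F : 'I_n -> H, X (\sum_a F a) = \sum_a X (F a).
  by move=> F; apply: (big_morph X XD X0).
have F2 : forall v, X v = omega (theta k l) *: U i l (U j k v) - omega (theta j i) *: U j k (U i l v).
  move=> v; have := congr1 (fun f => f v) (R1 i j k l); rewrite /opadd /opmul /opscale /= => e.
  rewrite /X -(addrK (omega (theta j i) *: U j k (U i l v)) (U i k (U j l v))) e.
  by rewrite addrAC addrK.
apply: functional_extensionality => x; rewrite /opmul /opscale.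
apply/eqP; rewrite -subr_eq0; apply/eqP; rewrite -/(X x).
have := R3p l l x; rewrite eqxx => <-.
rewrite XS big1 // => b _.
set w := U b l x.
have := R2p l l (X (Us b l w)); rewrite eqxx => <-.
apply: big1 => a _.
have [hA|hA] := boolP ((a != j) && (b != j)).
  case/andP: hA => haj hbj.
  rewrite /X (R4p _ _ _ _ hbj) (lin0 (LU _ _)) sub0r -scaleNr (linZ (LUs _ _)) R5p //.
  by rewrite scaler0 (lin0 (LU _ _)).
have [hB|hB] := boolP ((a != i) && (b != i)).
  case/andP: hB => hai hbi.
  rewrite F2 (R4p _ _ _ _ hbi) (lin0 (LU _ _)) scaler0 subr0.
  by rewrite (linZ (LUs _ _)) R5p ?scaler0 ?(lin0 (LU _ _)).
have [hai|hai] := eqVneq a i.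
  move: hA; rewrite hai hij /= negbK => /eqP hbj.
  rewrite hbj /X (linD (LUs _ _)) -scaleNr (linZ (LUs _ _)) R5p // scaler0 addr0.
  exact: LP.
move: hB; rewrite hai /= negbK => /eqP hbi.
move: hA; rewrite hbi hij andbT negbK => /eqP haj.
rewrite haj /X L2 (lin0 (LU _ _)) scaler0 subr0.
by rewrite (R4p i j l w hij) (lin0 (LU i k)) (lin0 (LUs j l)) (lin0 (LU j l)).
Qed.
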